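(* Let $\Sigma_A,\Sigma_B,\Sigma$ be finite nonempty sets and $(X_A,X_B,Y)$ random variables with values in $\Sigma_A\times\Sigma_B\times\Sigma$, all marginal probabilities positive, with $X_A,X_B$ independent conditional on $Y$. Let $PS:\Sigma_B\times\Delta_{\Sigma_B}\to\mathbb{R}$ be a proper scoring rule. For $h_A:\Sigma_A\to\Delta_\Sigma$ and $v_B:\Sigma_B\to[0,1]^\Sigma$ with $\sum_{x_B\in\Sigma_B}v_B(x_B)=(1,\dots,1)$, define the expected $PS$-gain $$G_{PS}(h_A,v_B):=\sum_{x_A,x_B}\Pr[X_A=x_A,X_B=x_B]\,PS\Big(x_B,\big(v_B(x_B')\cdot h_A(x_A)\big)_{x_B'\in\Sigma_B}\Big).$$ Then $v_B^*(x_B)=(\Pr[X_B=x_B\mid Y=y])_{y\in\Sigma}$, $h_A^*(x_A)=(\Pr[Y=y\mid X_A=x_A])_{y\in\Sigma}$ is a maximizer of $G_{PS}$ over all such pairs $(h_A,v_B)$.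
   Context: $\Delta_S$ denotes the set of probability vectors on a finite set $S$; $\cdot$ is the dot product in $\mathbb{R}^\Sigma$. A scoring rule $PS:\Sigma_B\times\Delta_{\Sigma_B}\to\mathbb{R}$ is proper if for all $\mathbf{p},\mathbf{q}\in\Delta_{\Sigma_B}$, $\sum_{\sigma}\mathbf{p}(\sigma)PS(\sigma,\mathbf{q})\le\sum_\sigma\mathbf{p}(\sigma)PS(\sigma,\mathbf{p})$. The constraint on $v_B$ ensures $(v_B(x_B')\cdot h_A(x_A))_{x_B'}\in\Delta_{\Sigma_B}$. *)

(* Defs.v *)
From HB Require Import structures.
From mathcomp Require Import all_boot all_order all_algebra.
Set Implicit Arguments. Unset Strict Implicit. Unset Printing Implicit Defensive.
Import Order.TTheory GRing.Theory Num.Theory.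
Local Open Scope ring_scope.

Definition is_prob (R : numDomainType) (T : finType) (p : {ffun T -> R}) : Prop :=
  (forall t, 0 <= p t) /\ \sum_(t : T) p t = 1.

(* A joint distribution P(a,b,y) = Pr[X_A=a, X_B=b, Y=y]. *)
Definition is_joint (R : numDomainType) (SA SB S : finType)
  (P : SA -> SB -> S -> R) : Prop :=
  (forall a b y, 0 <= P a b y) /\ \sum_(a : SA) \sum_(b : SB) \sum_(y : S) P a b y = 1.

Section Marginals.
Variables (R : numDomainType) (SA SB S : finType) (P : SA -> SB -> S -> R).
Definition PrA (a : SA) : R := \sum_(b : SB) \sum_(y : S) P a b y.
Definition PrB (b : SB) : R := \sum_(a : SA) \sum_(y : S) P a b y.
Definition PrY (y : S) : R := \sum_(a : SA) \sum_(b : SB) P a b y.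
Definition PrAY (a : SA) (y : S) : R := \sum_(b : SB) P a b y.
Definition PrBY (b : SB) (y : S) : R := \sum_(a : SA) P a b y.
Definition PrAB (a : SA) (b : SB) : R := \sum_(y : S) P a b y.

(* X_A and X_B independent conditional on Y:
   Pr[a,b | y] = Pr[a | y] Pr[b | y], written multiplicatively. *)
Definition cond_indep : Prop :=
  forall a b y, P a b y * PrY y = PrAY a y * PrBY b y.

Definition vB_star (b : SB) : {ffun S -> R} := [ffun y => PrBY b y / PrY y].
Definition hA_star (a : SA) : {ffun S -> R} := [ffun y => PrAY a y / PrA a].
End Marginals.

(* Proper scoring rule PS : Sigma_B x Delta_{Sigma_B} -> R (PS is given on all
   of {ffun SB -> R}, but properness only concerns the simplex). *)
Definition proper_scoring (R : numDomainType) (SB : finType)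
  (PS : SB -> {ffun SB -> R} -> R) : Prop :=
  forall p q : {ffun SB -> R}, is_prob p -> is_prob q ->
    \sum_(s : SB) p s * PS s q <= \sum_(s : SB) p s * PS s p.

Definition admissible_hA (R : numDomainType) (SA S : finType)
  (h : SA -> {ffun S -> R}) : Prop := forall a, is_prob (h a).

Definition admissible_vB (R : numDomainType) (SB S : finType)
  (v : SB -> {ffun S -> R}) : Prop :=
  (forall b y, 0 <= v b y <= 1) /\ (forall y, \sum_(b : SB) v b y = 1).

Definition pred_B (R : numDomainType) (SB S : finType)
  (v : SB -> {ffun S -> R}) (ha : {ffun S -> R}) : {ffun SB -> R} :=
  [ffun b' => \sum_(y : S) v b' y * ha y].

Definition gain (R : numDomainType) (SA SB S : finType)
  (P : SA -> SB -> S -> R) (PS : SB -> {ffun SB -> R} -> R)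
  (h : SA -> {ffun S -> R}) (v : SB -> {ffun S -> R}) : R :=
  \sum_(a : SA) \sum_(b : SB) PrAB P a b * PS b (pred_B v (h a)).

(* Main.v *)
Require Import Defs.
From HB Require Import structures.
From mathcomp Require Import all_boot all_order all_algebra.
From mathcomp Require Import ring.
Import Order.TTheory GRing.Theory Num.Theory.
Local Open Scope ring_scope.

Theorem mainTheorem8 (R : realFieldType) (SA SB S : finType)
  (a0 : SA) (b0 : SB) (y0 : S)
  (P : SA -> SB -> S -> R)
  (HP : is_joint P)
  (HA : forall a, 0 < PrA P a) (HB : forall b, 0 < PrB P b) (HY : forall y, 0 < PrY P y)
  (HCI : cond_indep P)
  (PS : SB -> {ffun SB -> R} -> R) (HPS : proper_scoring PS) :
  admissible_hA (hA_star P) /\ admissible_vB (vB_star P) /\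
  forall (h : SA -> {ffun S -> R}) (v : SB -> {ffun S -> R}),
    admissible_hA h -> admissible_vB v ->
    gain P PS h v <= gain P PS (hA_star P) (vB_star P).
Proof.
have [P0 _] := HP.
have PrA_AY a : PrA P a = \sum_y PrAY P a y.
  by rewrite /PrA /PrAY exchange_big.
have PrY_BY y : PrY P y = \sum_b PrBY P b y.
  by rewrite /PrY /PrBY exchange_big.
have PrA_AB a : PrA P a = \sum_b PrAB P a b by [].
have AY0 a y : 0 <= PrAY P a y by apply: sumr_ge0 => b _.
have BY0 b y : 0 <= PrBY P b y by apply: sumr_ge0 => a _.
have AB0 a b : 0 <= PrAB P a b by apply: sumr_ge0 => y _.
have hstar : admissible_hA (hA_star P).
  move=> a; split.
    by move=> y; rewrite ffunE divr_ge0 // ltW.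
  under eq_bigr do rewrite ffunE.
  by rewrite -mulr_suml -PrA_AY divff // gt_eqF.
split=> //; split.
  split.
    move=> b y; rewrite ffunE; apply/andP; split; first by rewrite divr_ge0 // ltW.
    rewrite ler_pdivrMr // mul1r PrY_BY (bigD1 b) //= lerDl.
    by apply: sumr_ge0 => i _.
  move=> y; under eq_bigr do rewrite ffunE.
  by rewrite -mulr_suml -PrY_BY divff // gt_eqF.
move=> h v Hh [Hv1 Hv2].
pose p a := [ffun b => PrAB P a b / PrA P a].
have pprob a : is_prob (p a).
  split; first by move=> b; rewrite ffunE divr_ge0 // ltW.
  under eq_bigr do rewrite ffunE.
  by rewrite -mulr_suml -PrA_AB divff // gt_eqF.
have gainE h' v' : gain P PS h' v' =
    \sum_a PrA P a * \sum_b p a b * PS b (pred_B v' (h' a)).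
  apply: eq_bigr => a _; rewrite mulr_sumr; apply: eq_bigr => b _.
  rewrite ffunE mulrA mulrCA divff ?mulr1 // gt_eqF //.
have predstar a : pred_B (vB_star P) (hA_star P a) = p a.
  apply/ffunP => b; rewrite !ffunE.
  under eq_bigr do rewrite !ffunE.
  rewrite /PrAB mulr_suml; apply: eq_bigr => y _.
  have Hy := HCI a b y.
  have hy0 : PrY P y != 0 by rewrite gt_eqF.
  have ha0 : PrA P a != 0 by rewrite gt_eqF.
  have -> : P a b y = PrAY P a y * PrBY P b y / PrY P y.
    by rewrite -Hy mulrK // unitfE.
  field. by rewrite hy0 ha0.
rewrite !gainE; apply: ler_sum => a _.
rewrite ler_pM2l // predstar; apply: HPS => //.
have [h0 h1] := Hh a.
split.
  move=> b; rewrite ffunE; apply: sumr_ge0 => y _.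
  by rewrite mulr_ge0 //; case/andP: (Hv1 b y).
under eq_bigr do rewrite ffunE.
rewrite exchange_big /=.
under eq_bigr do rewrite -mulr_suml Hv2 mul1r.
exact: h1.
Qed.
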